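(* Let $\mu$ be the Möbius function of the incidence algebra of the decomposition space $\mathbf C$ of layered finite posets, i.e. the convolution inverse of the zeta function $\zeta\equiv 1$ in the algebra of functions on isomorphism classes of finite posets with the convolution product described below. Then for every finite poset $P$, \[ \mu(P)=\begin{cases}(-1)^n & \text{if $P$ is a discrete poset (no two distinct elements comparable) with $n$ elements},\\ 0 & \text{otherwise.}\end{cases} \]
   Context: For $n\ge 0$ let $\underline n=\{1,\dots,n\}$ (with $\underline 0=\emptyset$). An $n$-layered finite poset is a finite poset $P$ with a monotone map $l:P\to\underline n$; its layers $P_i=l^{-1}(i)$ may be empty. The groupoid $\mathbf C_n$ has these as objects and poset isomorphisms commuting with the layerings as morphisms; these assemble into a simplicial groupoid $\mathbf C$ (inner face maps join adjacent layers, outer face maps delete the first/last layer, degeneracies insert empty layers), which is a decomposition space; $\mathbf C_1$ is the groupoid of finite posets. Taking homotopy cardinality of its incidence coalgebra, the incidence algebra of $\mathbf C$ is the $\mathbb Q$-vector space of functions $\varphi$ from isomorphism classes of finite posets to $\mathbb Q$ with convolution \[(\varphi*\psi)(P)=\sum_{l:P\to \underline 2\ \text{monotone}}\varphi(l^{-1}(1))\,\psi(l^{-1}(2)),\] where $l^{-1}(1),l^{-1}(2)$ carry the induced orders; the unit is $\delta(P)=1$ if $P=\emptyset$ and $0$ otherwise. The zeta function is $\zeta(P)=1$ for all $P$, and the Möbius function $\mu$ is its convolution inverse. *)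

(* Defs.v *)
From HB Require Import structures.
From mathcomp Require Import all_boot all_order all_algebra.
Unset Strict Implicit. Unset Printing Implicit Defensive.
Import GRing.Theory Num.Theory.
Local Open Scope ring_scope.

Definition is_poset (T : finType) (r : rel T) : Prop :=
  [/\ reflexive r, antisymmetric r & transitive r].

(* Elements of the incidence algebra: rational-valued functions on finite
   posets (their values on non-posets are irrelevant). *)
Definition poset_fun := forall T : finType, rel T -> rat.

(* Functions on isomorphism classes of finite posets. *)
Definition iso_invariant (phi : poset_fun) : Prop :=
  forall (T1 T2 : finType) (r1 : rel T1) (r2 : rel T2) (f : T1 -> T2),
    bijective f -> (forall x y, r1 x y = r2 (f x) (f y)) ->
    phi T1 r1 = phi T2 r2.

Definition sub_rel (T : finType) (r : rel T) (P : pred T) : rel {x : T | P x} :=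
  fun x y => r (val x) (val y).
Arguments sub_rel {T} r P.

(* Monotone layering l : P -> {1,2}, encoded with values in 'I_2 = {0,1}. *)
Definition monotone_layering (T : finType) (r : rel T) (l : {ffun T -> 'I_2}) : bool :=
  [forall x, forall y, r x y ==> (l x <= l y)%N].

(* Convolution: (phi * psi)(P) = sum over monotone l : P -> 2 of
   phi(l^-1(1)) psi(l^-1(2)). *)
Definition layer (T : finType) (l : {ffun T -> 'I_2}) (k : nat) : pred T :=
  fun x => (nat_of_ord (l x) == k)%N.

Definition conv (phi psi : poset_fun) (T : finType) (r : rel T) : rat :=
    \sum_(l : {ffun T -> 'I_2} | monotone_layering T r l)
      phi {x : T | layer T l 0 x} (sub_rel r (layer T l 0)) *
      psi {x : T | layer T l 1 x} (sub_rel r (layer T l 1)).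

Definition delta (T : finType) (r : rel T) : rat := if #|T| == 0%N then 1 else 0.

Definition zeta (T : finType) (r : rel T) : rat := 1.

Definition is_mobius (mu : poset_fun) : Prop :=
  (forall (T : finType) (r : rel T), is_poset T r -> conv mu zeta T r = delta T r) /\
  (forall (T : finType) (r : rel T), is_poset T r -> conv zeta mu T r = delta T r).

Definition discrete (T : finType) (r : rel T) : bool :=
  [forall x, forall y, r x y ==> (x == y)].

(* Main.v *)
Require Import Defs.
From HB Require Import structures.
From mathcomp Require Import all_boot all_order all_algebra.
From mathcomp Require Import lra zify.
Import GRing.Theory Num.Theory.
Local Open Scope ring_scope.
Set Implicit Arguments.

Definition fdef : poset_fun := fun T r => if discrete T r then (-1) ^+ #|T| else 0.

Definition disc_on (T : finType) (r : rel T) (P : pred T) : bool :=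
  [forall x, forall y, (P x && P y && r x y) ==> (x == y)].

Arguments disc_on {T}.

Definition fT (T : finType) (r : rel T) (P : pred T) : rat :=
  if disc_on r P then (-1) ^+ #|[pred x | P x]| else 0.

Arguments fT {T}.

Lemma fdef_sub (T : finType) (r : rel T) (P : pred T) :
  fdef _ (sub_rel r P) = fT r P.
Proof.
rewrite /fdef /fT card_sig.
have -> : discrete _ (sub_rel r P) = disc_on r P.
  apply/idP/idP.
  - move=> /forallP H; apply/forallP => x; apply/forallP => y.
    apply/implyP => /andP [/andP [Px Py] rxy].
    move: (H (exist _ x Px)) => /forallP /(_ (exist _ y Py)) /implyP /(_ rxy) /eqP [->] //.
  - move=> /forallP H; apply/forallP => x; apply/forallP => y.
    apply/implyP => rxy.
    move: (H (val x)) => /forallP /(_ (val y)) /implyP.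
    rewrite (valP x) (valP y) /= => /(_ rxy) /eqP E.
    by apply/eqP/val_inj.
by [].
Qed.

Lemma fT_full (T : finType) (r : rel T) (P : pred T) :
  (forall x, P x) -> fT r P = fdef T r.
Proof.
move=> HP; rewrite /fT /fdef.
have -> : #|[pred x | P x]| = #|T| by apply: eq_card => x; rewrite inE HP.
have -> : disc_on r P = discrete T r.
  apply: eq_forallb => x; apply: eq_forallb => y; by rewrite !HP.
by [].
Qed.

Lemma sub_poset (T : finType) (r : rel T) (P : pred T) :
  is_poset T r -> is_poset _ (sub_rel r P).
Proof.
case=> Hr Ha Ht; split.
- move=> x; exact: Hr.
- move=> x y H; apply: val_inj; exact: Ha.
- move=> y x z; exact: Ht.
Qed.

Lemma exists_min (T : finType) (r : rel T) (x0 : T) :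
  is_poset T r -> exists m, forall y, r y m -> y = m.
Proof.
case=> Hr Ha Ht.
case: (@arg_minnP T x0 predT (fun x => #|[set y | r y x]|)) => // m _ Hm.
exists m => y rym; apply/eqP; apply/negPn/negP => ne.
have : (#|[set z | r z y]| < #|[set z | r z m]|)%N.
  apply: proper_card; apply/properP; split.
  - apply/subsetP => z; rewrite !inE => rzy; exact: Ht rym.
  - exists m; rewrite !inE ?Hr //; apply/negP => rmy.
    by move: ne; rewrite (Ha y m) ?rym ?rmy ?eqxx.
by rewrite ltnNge Hm.
Qed.

Definition Sof (T : finType) (l : {ffun T -> 'I_2}) : {set T} := [set x | layer T l 0%N x].
Arguments Sof {T}.
Definition minset (T : finType) (r : rel T) : {set T} :=
  [set x | [forall y, r y x ==> (y == x)]].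

Arguments minset {T}.

Lemma claim (T : finType) (r : rel T) l : is_poset T r ->
  monotone_layering T r l && disc_on r (layer T l 0%N) = (Sof l \subset minset r).
Proof.
case=> Hr Ha Ht; apply/idP/idP.
- case/andP => /forallP Hm /forallP Hd; apply/subsetP => x; rewrite /Sof /minset !inE /layer => /eqP lx0.
  apply/forallP => y; apply/implyP => ryx.
  move: (Hm y) => /forallP /(_ x) /implyP /(_ ryx); rewrite lx0 leqn0 => /eqP ly0.
  move: (Hd y) => /forallP /(_ x) /implyP; apply. by rewrite /layer ly0 lx0 eqxx ryx.
- move=> /subsetP H; apply/andP; split.
  + apply/forallP => x; apply/forallP => y; apply/implyP => rxy.
    case: (boolP (layer T l 0%N y)) => Hy.
    * have := H y; rewrite /Sof /minset !inE => /(_ Hy) /forallP /(_ x) /implyP /(_ rxy) /eqP -> //.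
    * move: Hy; rewrite /layer; have := ltn_ord (l y); have := ltn_ord (l x); lia.
  + apply/forallP => x; apply/forallP => y; apply/implyP => /andP [/andP [_ Hy] rxy].
    have := H y; rewrite /Sof /minset !inE => /(_ Hy) /forallP /(_ x) /implyP /(_ rxy) //.
Qed.

Lemma alt_sum (T : finType) (M : {set T}) :
  \sum_(S : {set T} | S \subset M) (-1) ^+ #|S| = (if M == set0 then 1 else 0 : rat).
Proof.
case: (set_0Vmem M) => [->|[m Hm]].
  by rewrite eqxx (big_pred1 set0) ?cards0 // => S /=; rewrite subset0.
have -> : (M == set0) = false by apply/negbTE/set0Pn; exists m.
pose t (S : {set T}) := if m \in S then S :\ m else m |: S.
have tK : involutive t.
  move=> S; rewrite /t; case: (boolP (m \in S)) => H.
  - by rewrite setD11 setD1K.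
  - by rewrite setU11 setU1K.
set s := (X in X = _).
have : s = - s.
  rewrite {1}/s (reindex_inj (inv_inj tK)) /= -sumrN; apply: eq_big => S.
  - rewrite /t; case: (boolP (m \in S)) => H.
    + by rewrite -{2}(setD1K H) subUset sub1set Hm.
    + by rewrite subUset sub1set Hm.
  - move=> _; rewrite /t; case: (boolP (m \in S)) => H.
    + by rewrite (cardsD1 m S) H add1n exprS mulN1r opprK.
    + by rewrite cardsU1 H add1n exprS mulN1r.
move=> Hs; lra.
Qed.

Lemma minset0 (T : finType) (r : rel T) : is_poset T r ->
  (minset r == set0) = (#|T| == 0%N).
Proof.
move=> Hp; case: (pickP (@predT T)) => [x _ | H].
- have -> : (#|T| == 0%N) = false.
    by apply/negbTE; rewrite -lt0n; apply/card_gt0P; exists x.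
  apply/negbTE/set0Pn; case: (exists_min x Hp) => m Hm; exists m.
  rewrite /minset inE; apply/forallP => y; apply/implyP => rym; apply/eqP; exact: Hm.
- have -> : #|T| = 0%N by apply: eq_card0 => y; have := H y.
  rewrite eqxx; apply/eqP/setP => y; by have := H y.
Qed.

Lemma core (T : finType) (r : rel T) : is_poset T r ->
  \sum_(l | monotone_layering T r l) fT r (layer T l 0%N) = delta T r.
Proof.
move=> Hp.
have E1 : \sum_(l | monotone_layering T r l) fT r (layer T l 0%N) =
   \sum_(l | Sof l \subset minset r) (-1) ^+ #|Sof l| :> rat.
  rewrite big_mkcond [RHS]big_mkcond; apply: eq_bigr => l _.
  rewrite -(claim l Hp) /fT.
  have -> : #|[pred x | layer T l 0%N x]| = #|Sof l| by apply: eq_card => x; rewrite /Sof !inE.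
  by case: (monotone_layering T r l); case: (disc_on r _).
pose h (S : {set T}) : {ffun T -> 'I_2} := [ffun x => if x \in S then ord0 else ord_max].
have hK : forall S, Sof (h S) = S.
  move=> S; apply/setP => x; rewrite /Sof inE /layer ffunE; by case: (x \in S).
have E2 : \sum_(l | Sof l \subset minset r) (-1) ^+ #|Sof l| =
          \sum_(S : {set T} | S \subset minset r) (-1) ^+ #|S| :> rat.
  rewrite (reindex h); first by apply: eq_big => S; rewrite hK.
  apply: onW_bij; exists (@Sof T) => // l; apply/ffunP => x; rewrite /h ffunE /Sof inE /layer.
  case: (l x) => [[|[|n]] Hn] /=; try by apply: val_inj.
by rewrite E1 E2 alt_sum minset0.
Qed.

Definition rflip (T : finType) (r : rel T) : rel T := fun x y => r y x.

Arguments rflip {T}.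

Lemma flip_poset (T : finType) (r : rel T) : is_poset T r -> is_poset T (rflip r).
Proof.
case=> Hr Ha Ht; split.
- move=> x; exact: Hr.
- move=> x y H; apply: Ha; by rewrite andbC.
- move=> y x z H1 H2; exact: Ht H2 H1.
Qed.

Lemma fT_eq (T : finType) (r : rel T) (P Q : pred T) : P =1 Q -> fT r P = fT r Q.
Proof.
move=> E; rewrite /fT /disc_on.
have -> : #|[pred x | P x]| = #|[pred x | Q x]| by apply: eq_card => x; rewrite !inE E.
have -> : [forall x, forall y, (P x && P y && r x y) ==> (x == y)] =
          [forall x, forall y, (Q x && Q y && r x y) ==> (x == y)].
  by apply: eq_forallb => x; apply: eq_forallb => y; rewrite !E.
by [].
Qed.

Lemma fT_flip (T : finType) (r : rel T) (P : pred T) : fT r P = fT (rflip r) P.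
Proof.
rewrite /fT /disc_on.
have -> : [forall x, forall y, (P x && P y && r x y) ==> (x == y)] =
          [forall x, forall y, (P x && P y && rflip r x y) ==> (x == y)].
  apply/forallP/forallP => H x; apply/forallP => y; move: (H y) => /forallP /(_ x);
  by rewrite /rflip [P x && P y]andbC eq_sym.
by [].
Qed.

Lemma rev_le (a b : 'I_2) : (rev_ord a <= rev_ord b)%N = (b <= a)%N.
Proof. by case: a => [[|[|?]] ?]; case: b => [[|[|?]] ?]. Qed.

Lemma rev_eq1 (a : 'I_2) : (nat_of_ord (rev_ord a) == 1%N) = (nat_of_ord a == 0%N).
Proof. by case: a => [[|[|?]] ?]. Qed.

Lemma core_dual (T : finType) (r : rel T) : is_poset T r ->
  \sum_(l | monotone_layering T r l) fT r (layer T l 1%N) = delta T r.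
Proof.
move=> Hp; have := core (flip_poset Hp); rewrite /delta => <-.
pose c (l : {ffun T -> 'I_2}) : {ffun T -> 'I_2} := [ffun x => rev_ord (l x)].
have cK : involutive c by move=> l; apply/ffunP => x; rewrite !ffunE rev_ordK.
rewrite (reindex c); last by apply: onW_bij; exists c.
apply: eq_big => l.
- rewrite /monotone_layering; apply/forallP/forallP => H x; apply/forallP => y;
  move: (H y) => /forallP /(_ x); by rewrite /rflip !ffunE rev_le.
- move=> _; rewrite fT_flip; apply: fT_eq => x; by rewrite /layer ffunE rev_eq1.
Qed.

Theorem theorem3p4 (mu : poset_fun) :
  iso_invariant mu ->
  (is_mobius mu <->
   (forall (T : finType) (r : rel T), is_poset T r ->
      mu T r = (if discrete T r then (-1) ^+ #|T| else 0))).
Proof.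
move=> Hiso; split.
- case=> Hl _.
  suff H : forall n (T : finType) (r : rel T), #|T| = n -> is_poset T r -> mu T r = fdef T r.
    move=> T r Hp; exact: (H _ T r erefl Hp).
  elim/ltn_ind => n IH T r HT Hp.
  have E : conv mu zeta T r = conv fdef zeta T r.
    rewrite (Hl T r Hp) /conv -(core Hp); apply: eq_bigr => l _; by rewrite /zeta mulr1 fdef_sub.
  move: E; rewrite /conv.
  pose l0 : {ffun T -> 'I_2} := [ffun=> ord0].
  have Hl0 : monotone_layering T r l0.
    by apply/forallP => x; apply/forallP => y; rewrite !ffunE implybT.
  rewrite !(bigD1 l0 Hl0) /=.
  have -> : \sum_(l | monotone_layering T r l && (l != l0))
               mu _ (sub_rel r (layer T l 0%N)) * zeta _ (sub_rel r (layer T l 1%N)) =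
            \sum_(l | monotone_layering T r l && (l != l0))
               fdef _ (sub_rel r (layer T l 0%N)) * zeta _ (sub_rel r (layer T l 1%N)).
    apply: eq_bigr => l /andP [_ Hne]; congr (_ * _).
    rewrite (IH _ _ _ (sub_rel r (layer T l 0%N)) erefl (sub_poset _ Hp)) //.
    rewrite -HT.
    have [x Hx] : exists x, ~~ layer T l 0%N x.
      apply/existsP; apply: contraR Hne => /existsPn H; apply/eqP/ffunP => x.
      rewrite ffunE; apply/val_inj => /=; move: (H x); rewrite negbK /layer => /eqP //.
    have := cardC [pred x | layer T l 0%N x].
    have : (0 < #|[predC [pred x | layer T l 0%N x]]|)%N by apply/card_gt0P; exists x; rewrite inE /=.
    rewrite card_sig => h1 h2; rewrite -h2 -{1}(addn0 #|_|) ltn_add2l. exact: h1.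
  move/addIr; rewrite /zeta !mulr1 fdef_sub.
  have Hall : forall x, layer T l0 0%N x by move=> x; rewrite /layer ffunE.
  rewrite (@fT_full T r _ Hall).
  have <- // : mu _ (sub_rel r (layer T l0 0%N)) = mu T r.
  apply: (Hiso _ _ _ _ val) => //.
  exists (fun x => exist _ x (Hall x)) => [y | x] //; by apply: val_inj.
- move=> H; split => T r Hp.
  + rewrite /conv -(core Hp); apply: eq_bigr => l _; rewrite /zeta mulr1 H; last exact: sub_poset.
    exact: fdef_sub.
  + rewrite /conv -(core_dual Hp); apply: eq_bigr => l _; rewrite /zeta mul1r H; last exact: sub_poset.
    exact: fdef_sub.
Qed.
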